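(* Let $H$ be a trigraph of maximum red degree at most $4$ containing a fence gadget $F$ attached to a single vertex $s$, where $s$ has red degree at most $3$, and assume $F$ satisfies the attachment rule in $H$. Then there is a partial $4$-sequence from $H$ to the trigraph $H'$ obtained from $H$ by contracting $V(F)$ into a single vertex.
   Context: A trigraph $G$ consists of a vertex set $V(G)$ and two disjoint sets of unordered pairs of distinct vertices: black edges and red edges; the red graph is formed by the red edges, and the red degree of a vertex is its degree in the red graph. Contracting two distinct vertices $u,v$ replaces them by a new vertex $w$ such that, for every other vertex $z$, $wz$ is black if $uz,vz$ are both black, a non-edge if both are non-edges, and red otherwise. A partial $d$-sequence from $G$ is a sequence of trigraphs starting at $G$, each obtained from the previous by one contraction, all of maximum red degree at most $d$. A fence gadget is a trigraph $F$ on $A\cup B$, $A=\{a_1,\dots,a_6\}$, $B=\{b_1,\dots,b_6\}$, whose black edges are those of the cycles $a_1a_2a_3a_4a_5a_6a_1$ and $b_1b_2b_3b_4b_5b_6b_1$ together with $b_1a_6$, and whose red edges are $a_ib_i$ for $i\in[6]$ and $a_ib_{i+1}$ for $i\in[5]$. Inside a trigraph $G$, $F$ is attached to a nonempty set $S\subseteq V(G)\setminus V(F)$ if every vertex of $A$ is joined by a black edge to every vertex of $S$ and no vertex of $B$ is adjacent to a vertex of $S$. $F$ satisfies the attachment rule in $G$ if $V(F)$ is the vertex set of a connected component of the red graph of $G$ and there is a set $X\subseteq V(G)\setminus(V(F)\cup S)$ such that every vertex of $A$ has exactly $X\cup S$ as its set of neighbours outside $V(F)$, every vertex of $B$ has exactly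 $X$ as its set of neighbours outside $V(F)$ (all these edges black), and every vertex of $X$ is adjacent to every vertex of $S$. *)

(* Defs.v *)
From mathcomp Require Import all_boot all_order.
Set Implicit Arguments. Unset Strict Implicit. Unset Printing Implicit Defensive.

(* A trigraph with vertices drawn from a finite ambient type T.
   Unordered pairs are represented as 2-element sets. *)
Record trigraph (T : finType) := Trigraph {
  tV : {set T};
  tB : {set {set T}};
  tR : {set {set T}}
}.

Section Trigraphs.
Variable T : finType.
Implicit Types (G : trigraph T) (S : {set T}) (x y z r : T).

Definition wf_trigraph G : Prop :=
  (forall e, e \in tB G :|: tR G -> e \subset tV G /\ #|e| = 2) /\
  [disjoint tB G & tR G].

Definition adj G x y : bool := ([set x; y] \in tB G) || ([set x; y] \in tR G).
Definition redrel G : rel T := fun x y => [set x; y] \in tR G.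

Definition red_deg G x : nat := #|[set z in tV G | [set x; z] \in tR G]|.

Definition max_red_le G (d : nat) : Prop :=
  forall x, x \in tV G -> red_deg G x <= d.

(* Contract the set S (nonempty, S ⊆ V) into a single new vertex, which is
   named r (r ∈ S). *)
Definition contractSet G S r : trigraph T :=
  Trigraph ((tV G :\: S) :|: [set r])
    ([set e in tB G | e \subset tV G :\: S] :|:
     [set [set r; z] | z in tV G :\: S & [forall x in S, [set x; z] \in tB G]])
    ([set e in tR G | e \subset tV G :\: S] :|:
     [set [set r; z] | z in tV G :\: S &
        ~~ [forall x in S, [set x; z] \in tB G] && [exists x in S, adj G x z]]).

Definition contract G u v : trigraph T := contractSet G [set u; v] u.

Inductive dseq (d : nat) : trigraph T -> trigraph T -> Prop :=
| dseq_nil G : max_red_le G d -> dseq d G G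
| dseq_cons G u v G' :
    max_red_le G d -> u \in tV G -> v \in tV G -> u != v ->
    dseq d (contract G u v) G' -> dseq d G G'.

(* Fence gadget, 0-based indices: a_i = a (i-1), b_i = b (i-1). *)
Definition cyc6 (i j : 'I_6) : bool := (j == (i.+1 %% 6) :> nat) || (i == (j.+1 %% 6) :> nat).

Definition fence_vertices (a b : 'I_6 -> T) : {set T} :=
  [set a i | i in 'I_6] :|: [set b i | i in 'I_6].

Definition is_fence G (a b : 'I_6 -> T) : Prop :=
  injective a /\ injective b /\ (forall i j, a i != b j) /\
  fence_vertices a b \subset tV G /\
  (forall i j, ([set a i; a j] \in tB G) = cyc6 i j) /\
  (forall i j, ([set b i; b j] \in tB G) = cyc6 i j) /\
  (forall i j, ([set a i; a j] \in tR G) = false) /\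
  (forall i j, ([set b i; b j] \in tR G) = false) /\
  (forall i j, ([set a i; b j] \in tB G) = ((j == 0 :> nat) && (i == 5 :> nat))) /\
  (forall i j, ([set a i; b j] \in tR G) =
                 ((j == i :> nat) || ((j == i.+1 :> nat) && (i < 5)))).

Definition attached G (a b : 'I_6 -> T) S : Prop :=
  S != set0 /\ S \subset tV G :\: fence_vertices a b /\
  (forall i x, x \in S -> [set a i; x] \in tB G) /\
  (forall i x, x \in S -> ~~ adj G (b i) x).

Definition attachment_rule G (a b : 'I_6 -> T) S : Prop :=
  (exists2 x, x \in fence_vertices a b &
     fence_vertices a b = [set y | connect (redrel G) x y]) /\
  exists X : {set T},
    X \subset tV G :\: (fence_vertices a b :|: S) /\
    (forall i z, z \in tV G :\: fence_vertices a b ->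
        (adj G (a i) z = (z \in X :|: S)) /\
        (z \in X :|: S -> [set a i; z] \in tB G)) /\
    (forall i z, z \in tV G :\: fence_vertices a b ->
        (adj G (b i) z = (z \in X)) /\
        (z \in X -> [set b i; z] \in tB G)) /\
    (forall x y, x \in X -> y \in S -> adj G x y).

End Trigraphs.

(* Main.v *)
Require Import Defs.
From mathcomp Require Import all_boot all_order.
From Stdlib Require Import Classical.
Set Implicit Arguments. Unset Strict Implicit. Unset Printing Implicit Defensive.

Section Gen.
Variable T : finType.
Implicit Types (G H : trigraph T) (p : T -> T) (S : {set T}) (x y z r u w t : T).

Definition blk G x y := [set x; y] \in tB G.
Definition rd G x y := [set x; y] \in tR G.

Definition AllB H p x y := forall u w, u \in tV H -> w \in tV H -> p u = x -> p w = y -> blk H u w.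
Definition ExA H p x y := exists u w, [/\ u \in tV H, w \in tV H, p u = x, p w = y & adj H u w].

Definition Inv H G p := [/\ wf_trigraph G, tV G = p @: tV H &
  forall x y, x \in tV G -> y \in tV G -> x != y ->
   (blk G x y <-> AllB H p x y) /\ (rd G x y <-> ~ AllB H p x y /\ ExA H p x y)].

Lemma set2_inj r z z' : [set r; z] = [set r; z'] -> z != r -> z = z'.
Proof.
move=> E nz; have : z \in [set r; z'] by rewrite -E set22.
by rewrite in_set2 => /orP[/eqP Ez|/eqP //]; rewrite Ez eqxx in nz.
Qed.

Lemma blk_sym G x y : blk G x y = blk G y x.
Proof. by rewrite /blk setUC. Qed.
Lemma rd_sym G x y : rd G x y = rd G y x.
Proof. by rewrite /rd setUC. Qed.
Lemma adj_sym G x y : adj G x y = adj G y x.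
Proof. by rewrite /adj setUC. Qed.

Lemma AllB_congr H p p' x y x' y' :
  (forall u, u \in tV H -> (p u = x <-> p' u = x')) ->
  (forall u, u \in tV H -> (p u = y <-> p' u = y')) ->
  (AllB H p x y <-> AllB H p' x' y').
Proof.
move=> hx hy; split=> hA u w hu hw eu ew.
  by apply: hA => //; [apply/hx | apply/hy].
by apply: hA => //; [apply/hx | apply/hy].
Qed.

Lemma ExA_congr H p p' x y x' y' :
  (forall u, u \in tV H -> (p u = x <-> p' u = x')) ->
  (forall u, u \in tV H -> (p u = y <-> p' u = y')) ->
  (ExA H p x y <-> ExA H p' x' y').
Proof.
move=> hx hy; split=> -[u [w [hu hw eu ew ha]]]; exists u, w; split=> //.
- by apply/hx.
- by apply/hy.
- by apply/hx.
- by apply/hy.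
Qed.

Lemma AllB_sym H p x y : AllB H p x y <-> AllB H p y x.
Proof.
by split=> hA u w hu hw eu ew; rewrite blk_sym; apply: hA.
Qed.

Lemma ExA_sym H p x y : ExA H p x y <-> ExA H p y x.
Proof.
by split=> -[u [w [hu hw eu ew ha]]]; exists w, u; split=> //; rewrite adj_sym.
Qed.

Lemma Inv_ext H G p p' : Inv H G p -> {in tV H, p =1 p'} -> Inv H G p'.
Proof.
move=> [wf hV hC] e; split=> //; first by rewrite hV; apply: eq_in_imset.
move=> x y hx hy nxy; have [h1 h2] := hC x y hx hy nxy.
have cx : forall v, forall u, u \in tV H -> (p u = v <-> p' u = v).
  by move=> v u hu; rewrite e.
split; first by apply: iff_trans h1 _; exact: AllB_congr (cx x) (cx y).
have ea := AllB_congr (cx x) (cx y); have ee := ExA_congr (cx x) (cx y).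
apply: iff_trans h2 _; split=> -[n1 n2]; split.
- by move/ea. - by apply/ee. - by move/ea. - by apply/ee.
Qed.

Lemma wf_edge G e : wf_trigraph G -> e \in tB G :|: tR G ->
  exists x y, [/\ x != y, x \in tV G, y \in tV G & e = [set x; y]].
Proof.
move=> [h _] he; have [sub c2] := h e he.
have /cards2P [x [y [nxy E]]] : #|e| == 2 by rewrite c2.
exists x, y; split=> //.
- by apply: (subsetP sub); rewrite E set21.
- by apply: (subsetP sub); rewrite E set22.
Qed.

Lemma wf_rd G x y : wf_trigraph G -> rd G x y -> [/\ x != y, x \in tV G & y \in tV G].
Proof.
move=> wf hr; have he : [set x; y] \in tB G :|: tR G by rewrite in_setU -/(rd G x y) hr orbT.
have [sub c2] := wf.1 _ he.
split.
- by apply/eqP => E; move: c2; rewrite E setUid cards1.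
- by apply: (subsetP sub); rewrite set21.
- by apply: (subsetP sub); rewrite set22.
Qed.

Lemma Inv_id H : wf_trigraph H -> Inv H H id.
Proof.
move=> wf; split=> //; first by rewrite imset_id.
move=> x y hx hy nxy; split.
  by split=> [hb u w _ _ /= -> -> // | hA]; exact: hA.
split.
- move=> hr; split.
    move=> hA; have hb := hA x y hx hy erefl erefl.
    by move: (disjointFr wf.2 hb); rewrite /rd in hr; rewrite hr.
  by exists x, y; split=> //; rewrite /adj; rewrite /rd in hr; rewrite hr orbT.
- move=> [nA [u [w [hu hw /= eu ew ha]]]]; subst x y.
  case/orP: ha => // hb; exfalso; apply: nA => u' w' _ _ /= -> ->; exact: hb.
Qed.


Lemma cs_blk_out G S r x y : r \in S -> x \in tV G :\: S -> y \in tV G :\: S ->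
  blk (contractSet G S r) x y = blk G x y.
Proof.
move=> rS hx hy; rewrite /blk /= in_setU inE.
have -> : [set x; y] \subset tV G :\: S by rewrite subUset !sub1set hx hy.
rewrite andbT; case: ([set x; y] \in tB G) => //=.
apply/negbTE/imsetP => -[z _ E].
have : r \in [set x; y] by rewrite E set21.
by rewrite in_set2 => /orP[] /eqP Er; [move: hx|move: hy]; rewrite -Er in_setD rS.
Qed.

Lemma cs_rd_out G S r x y : r \in S -> x \in tV G :\: S -> y \in tV G :\: S ->
  rd (contractSet G S r) x y = rd G x y.
Proof.
move=> rS hx hy; rewrite /rd /= in_setU inE.
have -> : [set x; y] \subset tV G :\: S by rewrite subUset !sub1set hx hy.
rewrite andbT; case: ([set x; y] \in tR G) => //=.
apply/negbTE/imsetP => -[z _ E].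
have : r \in [set x; y] by rewrite E set21.
by rewrite in_set2 => /orP[] /eqP Er; [move: hx|move: hy]; rewrite -Er in_setD rS.
Qed.

Lemma cs_blk_r G S r y : r \in S -> y \in tV G :\: S ->
  blk (contractSet G S r) r y = [forall x in S, [set x; y] \in tB G].
Proof.
move=> rS hy; rewrite /blk /= in_setU inE.
have -> : ([set r; y] \subset tV G :\: S) = false.
  by apply/negbTE/negP => /subsetP/(_ r (set21 _ _)); rewrite in_setD rS.
rewrite andbF /=.
have yr : y != r by apply/eqP => E'; move: hy; rewrite E' in_setD rS.
apply/imsetP/idP => [[z hz E] | hf].
  rewrite (set2_inj E yr); by move: hz; rewrite inE => /andP[].
by exists y => //; rewrite inE hy.
Qed.

Lemma cs_rd_r G S r y : r \in S -> y \in tV G :\: S ->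
  rd (contractSet G S r) r y =
    ~~ [forall x in S, [set x; y] \in tB G] && [exists x in S, adj G x y].
Proof.
move=> rS hy; rewrite /rd /= in_setU inE.
have -> : ([set r; y] \subset tV G :\: S) = false.
  by apply/negbTE/negP => /subsetP/(_ r (set21 _ _)); rewrite in_setD rS.
rewrite andbF /=.
have yr : y != r by apply/eqP => E'; move: hy; rewrite E' in_setD rS.
apply/imsetP/idP => [[z hz E] | hf].
  rewrite (set2_inj E yr); by move: hz; rewrite inE => /andP[].
by exists y => //; rewrite inE hy.
Qed.

Lemma wf_cs G S r : wf_trigraph G -> r \in S -> wf_trigraph (contractSet G S r).
Proof.
move=> wf rS.
have im_ok : forall z, z \in tV G :\: S ->
    [set r; z] \subset tV (contractSet G S r) /\ #|[set r; z]| = 2.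
  move=> z hz; split.
    by rewrite subUset !sub1set /= !in_setU in_set1 eqxx orbT hz.
  rewrite cards2; case: eqP => // E; by move: hz; rewrite -E in_setD rS.
split.
  move=> e; rewrite /= !in_setU !inE => /orP[/orP[]|/orP[]].
  - move=> /andP[hB hs]; split; first by apply: subset_trans hs (subsetUl _ _).
    by apply: (wf.1 e _).2; rewrite in_setU hB.
  - by move=> /imsetP[z hz ->]; apply: im_ok; move: hz; rewrite inE => /andP[].
  - move=> /andP[hB hs]; split; first by apply: subset_trans hs (subsetUl _ _).
    by apply: (wf.1 e _).2; rewrite in_setU hB orbT.
  - by move=> /imsetP[z hz ->]; apply: im_ok; move: hz; rewrite inE => /andP[].
rewrite -setI_eq0; apply/eqP/setP => e; rewrite in_setI in_set0.
apply/negbTE/negP => /andP[]; rewrite /= !in_setU !inE => /orP[] hB /orP[] hR.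
- case/andP: hB => hB _; case/andP: hR => hR _.
  by move: (disjointFr wf.2 hB); rewrite hR.
- case/andP: hB => _ hs; case/imsetP: hR => z _ E.
  by move: hs; rewrite E subUset sub1set in_setD rS.
- case/andP: hR => _ hs; case/imsetP: hB => z _ E.
  by move: hs; rewrite E subUset sub1set in_setD rS.
- case/imsetP: hB => z hz E; case/imsetP: hR => z' hz' E'.
  move: hz hz'; rewrite !inE => /andP[hz1 hz2] /andP[hz1' /andP[hz2' _]].
  have zr : z != r by apply/eqP => E''; move: hz1; rewrite E'' ?in_setD rS.
  rewrite E in E'; rewrite -(set2_inj E' zr) in hz2'.
  by rewrite hz2 in hz2'.
Qed.

Lemma Inv_cs H G p S r p' : Inv H G p -> S \subset tV G -> r \in S ->
  (forall t, t \in tV H -> p' t = if p t \in S then r else p t) ->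
  Inv H (contractSet G S r) p'.
Proof.
move=> [wf hV hC] sS rS hp.
have cls_out : forall x u, x \notin S -> u \in tV H -> (p u = x <-> p' u = x).
  move=> x u xS hu; rewrite hp //; case: ifP => hpu; split => // E.
  - by move: xS; rewrite -E hpu.
  - by move: xS; rewrite -E rS.
have cls_r : forall u, u \in tV H -> (p u \in S <-> p' u = r).
  move=> u hu; rewrite hp //; case: ifP => hpu; split => // E.
  by move: hpu; rewrite E rS.
have nonempty : forall x, x \in tV G -> exists2 u, u \in tV H & p u = x.
  by move=> x; rewrite hV => /imsetP[u hu ->]; exists u.
have key : forall y, y \in tV G :\: S ->
   (blk (contractSet G S r) r y <-> AllB H p' r y) /\
   (rd (contractSet G S r) r y <-> ~ AllB H p' r y /\ ExA H p' r y).
  move=> y hy; have /setDP [hyG yS] := hy.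
  have cy : forall u, u \in tV H -> (p u = y <-> p' u = y).
    by move=> u; apply: cls_out.
  have bl : [forall x in S, [set x; y] \in tB G] <-> AllB H p' r y.
    split.
    - move=> /forall_inP hf u w hu hw eu ew.
      have hpu : p u \in S by apply/cls_r.
      have hx : p u \in tV G by apply: (subsetP sS).
      have nxy : p u != y by apply/eqP => E; move: yS; rewrite -E hpu.
      have [h1 _] := hC _ _ hx hyG nxy.
      by apply: (h1.1 (hf _ hpu)) => //; apply/cy.
    - move=> hA; apply/forall_inP => x xS.
      have hx : x \in tV G by apply: (subsetP sS).
      have nxy : x != y by apply/eqP => E; move: yS; rewrite -E xS.
      have [h1 _] := hC _ _ hx hyG nxy.
      apply/h1 => u w hu hw eu ew; apply: hA => //.
        by apply/(cls_r _ hu); rewrite eu.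
      by apply/cy.
  have ad : [exists x in S, adj G x y] <-> ExA H p' r y.
    split.
    - move=> /exists_inP [x xS hxy].
      have hx : x \in tV G by apply: (subsetP sS).
      have nxy : x != y by apply/eqP => E; move: yS; rewrite -E xS.
      have [h1 h2] := hC _ _ hx hyG nxy.
      have [u hu eu] := nonempty x hx; have [w hw ew] := nonempty y hyG.
      have exa : ExA H p x y.
        case/orP: hxy => [hb | hr].
          exists u, w; split=> //; rewrite /adj; apply/orP; left; exact: (h1.1 hb).
        exact: (h2.1 hr).2.
      case: exa => u' [w' [hu' hw' eu' ew' ha]]; exists u', w'; split=> //.
        by apply/(cls_r _ hu'); rewrite eu'.
      by apply/cy.
    - case=> u [w [hu hw eu ew ha]].
      have hpu : p u \in S by apply/cls_r.
      have hx : p u \in tV G by apply: (subsetP sS).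
      have nxy : p u != y by apply/eqP => E; move: yS; rewrite -E hpu.
      have [h1 h2] := hC _ _ hx hyG nxy.
      apply/exists_inP; exists (p u) => //; rewrite /adj.
      case hb: ([set p u; y] \in tB G) => //=.
      apply/h2; split.
        by move=> hA; move: hb; rewrite -/(blk G (p u) y) => /negbT/negP; apply; apply/h1.
      by exists u, w; split => //; apply/cy.
  rewrite cs_blk_r // cs_rd_r //; split => //.
  split.
    move=> /andP [nf ef]; split; [move=> hA; move/negP: nf; apply; apply/bl | apply/ad] => //.
  move=> [nA eA]; apply/andP; split; [apply/negP => hf; apply: nA; apply/bl | apply/ad] => //.
split.
- exact: wf_cs.
- apply/setP => t; rewrite /= in_setU in_set1 in_setD; apply/idP/idP.
  + move=> /orP[/andP[tS] | /eqP ->].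
      rewrite hV => /imsetP[u hu Eu].
      by apply/imsetP; exists u => //; rewrite hp // -Eu (negbTE tS).
    have [u hu Eu] := nonempty r (subsetP sS r rS).
    by apply/imsetP; exists u => //; rewrite hp // Eu rS.
  + move=> /imsetP[u hu ->]; rewrite hp //; case: ifP => hpu; rewrite ?eqxx ?orbT //.
    by rewrite hpu hV /= (imset_f p hu).
move=> x y; rewrite /= !in_setU !in_set1 => hx hy nxy.
case/orP: hx => [hx|/eqP Ex]; case/orP: hy => [hy|/eqP Ey].
- have /setDP [hxG xS] := hx; have /setDP [hyG yS] := hy.
  have [h1 h2] := hC _ _ hxG hyG nxy.
  have cx : forall u, u \in tV H -> (p u = x <-> p' u = x) by move=> u; apply: cls_out.
  have cy : forall u, u \in tV H -> (p u = y <-> p' u = y) by move=> u; apply: cls_out.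
  have ea := AllB_congr cx cy; have ee := ExA_congr cx cy.
  rewrite cs_blk_out // cs_rd_out //; split.
    exact: iff_trans h1 ea.
  apply: iff_trans h2 _; split=> -[n1 n2]; split.
  + by move/ea. + by apply/ee. + by move/ea. + by apply/ee.
- subst y; have [k1 k2] := key x hx.
  rewrite blk_sym rd_sym; split.
    exact: iff_trans k1 (AllB_sym _ _ _ _).
  apply: iff_trans k2 _; split=> -[n1 n2]; split.
  + by move/AllB_sym. + by apply/ExA_sym. + by move/AllB_sym. + by apply/ExA_sym.
- subst x; exact: key.
- by subst; rewrite eqxx in nxy.
Qed.

Lemma Inv_uniq H G1 G2 p1 p2 : Inv H G1 p1 -> Inv H G2 p2 -> {in tV H, p1 =1 p2} -> G1 = G2.
Proof.
move=> i1 i2 ep; have := Inv_ext i1 ep.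
case=> wf1 hV1 hC1; case: i2 => wf2 hV2 hC2.
have eV : tV G1 = tV G2 by rewrite hV1 hV2.
have sub : forall G G', wf_trigraph G -> tV G = tV G' ->
  (forall x y, x \in tV G -> y \in tV G -> x != y -> (blk G x y -> blk G' x y) /\ (rd G x y -> rd G' x y)) ->
  {subset tB G <= tB G'} /\ {subset tR G <= tR G'}.
  move=> G G' wf ev hc; split=> f hf.
    have hf' : f \in tB G :|: tR G by rewrite in_setU hf.
    have [x [y [nxy hx hy E]]] := wf_edge wf hf'.
    by rewrite E; apply: (hc x y hx hy nxy).1; rewrite /blk -E.
  have hf' : f \in tB G :|: tR G by rewrite in_setU hf orbT.
  have [x [y [nxy hx hy E]]] := wf_edge wf hf'.
  by rewrite E; apply: (hc x y hx hy nxy).2; rewrite /rd -E.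
have c12 : forall x y, x \in tV G1 -> y \in tV G1 -> x != y ->
    (blk G1 x y -> blk G2 x y) /\ (rd G1 x y -> rd G2 x y).
  move=> x y hx hy nxy; have [b1 r1] := hC1 x y hx hy nxy.
  have hx' : x \in tV G2 by rewrite -eV.
  have hy' : y \in tV G2 by rewrite -eV.
  have [b2 r2] := hC2 x y hx' hy' nxy.
  by split=> h; [apply/b2/b1 | apply/r2/r1].
have c21 : forall x y, x \in tV G2 -> y \in tV G2 -> x != y ->
    (blk G2 x y -> blk G1 x y) /\ (rd G2 x y -> rd G1 x y).
  move=> x y hx hy nxy; have [b2 r2] := hC2 x y hx hy nxy.
  have hx' : x \in tV G1 by rewrite eV.
  have hy' : y \in tV G1 by rewrite eV.
  have [b1 r1] := hC1 x y hx' hy' nxy.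
  by split=> h; [apply/b1/b2 | apply/r1/r2].
have [s1 s2] := sub G1 G2 wf1 eV c12.
have [t1 t2] := sub G2 G1 wf2 (esym eV) c21.
have eB : tB G1 = tB G2 by apply/setP => f; apply/idP/idP; [apply: s1 | apply: t1].
have eR : tR G1 = tR G2 by apply/setP => f; apply/idP/idP; [apply: s2 | apply: t2].
clear -eV eB eR; move: eV eB eR.
by case: G1 => V1 B1 R1; case: G2 => V2 B2 R2 /= -> -> ->.
Qed.

End Gen.


Definition K := (bool * 'I_6)%type.
Definition cblack (k l : K) : bool :=
  if k.1 == l.1 then cyc6 k.2 l.2
  else if k.1 then (k.2 == 0 :> nat) && (l.2 == 5 :> nat)
  else (l.2 == 0 :> nat) && (k.2 == 5 :> nat).
Definition cred (k l : K) : bool :=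
  if k.1 == l.1 then false
  else if k.1 then (k.2 == l.2 :> nat) || ((k.2 == l.2.+1 :> nat) && (l.2 < 5))
  else (l.2 == k.2 :> nat) || ((l.2 == k.2.+1 :> nat) && (k.2 < 5)).
Definition o0 : 'I_6 := @Ordinal 6 0 isT.
Definition o1 : 'I_6 := @Ordinal 6 1 isT.
Definition o2 : 'I_6 := @Ordinal 6 2 isT.
Definition o3 : 'I_6 := @Ordinal 6 3 isT.
Definition o4 : 'I_6 := @Ordinal 6 4 isT.
Definition o5 : 'I_6 := @Ordinal 6 5 isT.
Definition ords : seq 'I_6 := [:: o0; o1; o2; o3; o4; o5].
Definition allK : seq K := [seq (false, i) | i <- ords] ++ [seq (true, i) | i <- ords].
Lemma mem_allK k : k \in allK.
Proof.
case: k => [[] i]; rewrite mem_cat; apply/orP; [right|left]; apply/mapP; exists i => //;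
by case: i => [[|[|[|[|[|[|i]]]]]] hi] //; rewrite !inE; apply/orP; (try by left; apply/eqP/val_inj); right; rewrite !inE; repeat (apply/orP; (try by left; apply/eqP/val_inj); right).
Qed.
Lemma card_le_count (Pr : pred K) : #|[set l | Pr l]| <= count Pr allK.
Proof.
rewrite -size_filter; apply: leq_trans (card_size _).
apply: subset_leq_card; apply/subsetP => l; rewrite inE => hl.
by rewrite mem_filter hl mem_allK.
Qed.

Definition isrep (q : K -> K) k := has (fun k' => q k' == k) allK.
Definition allb (q : K -> K) (k l : K) := all (fun k' => all (fun l' => (q k' == k) && (q l' == l) ==> cblack k' l') allK) allK.
Definition exa (q : K -> K) (k l : K) := has (fun k' => has (fun l' => [&& q k' == k, q l' == l & cblack k' l' || cred k' l']) allK) allK.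
Definition credp (q : K -> K) (k l : K) := ~~ allb q k l && exa q k l.
Definition mixedb (q : K -> K) k := has (fun k' => (q k' == k) && k'.1) allK && has (fun k' => (q k' == k) && ~~ k'.1) allK.
Definition okq (q : K -> K) := all (fun k => isrep q k ==> (count (fun l => [&& isrep q l, l != k & credp q k l]) allK + mixedb q k <= 4)) allK && (count (mixedb q) allK <= 1).
Definition upd (q : K -> K) (x y : K) : K -> K := fun k => let v := q k in if v == y then x else v.
Fixpoint okchain (q : K -> K) (st : seq (K*K)) (r : K) : bool :=
  match st with
  | [::] => okq q && all (fun k => q k == r) allK
  | (x,y) :: st' => [&& okq q, isrep q x, isrep q y, x != y & okchain (upd q x y) st' r]
  end.

Definition steps : seq (K * K) :=
  [:: ((false,o0),(true,o0)); ((true,o1),(true,o2)); ((false,o1),(false,o2));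
      ((true,o3),(true,o1)); ((false,o3),(false,o1)); ((true,o4),(true,o3));
      ((false,o4),(false,o0)); ((false,o5),(false,o3)); ((true,o5),(true,o4));
      ((false,o4),(false,o5)); ((true,o5),(false,o4))].


Section Fence.
Variable T : finType.
Variables (H : trigraph T) (a b : 'I_6 -> T) (s : T).
Hypothesis wfH : wf_trigraph H.
Hypothesis maxH : max_red_le H 4.
Hypothesis fenceH : is_fence H a b.
Hypothesis attH : attached H a b [set s].
Hypothesis sdeg : red_deg H s <= 3.
Hypothesis ruleH : attachment_rule H a b [set s].

Definition fv (k : K) : T := if k.1 then b k.2 else a k.2.
Local Notation F := (fence_vertices a b).

Lemma fv_inj : injective fv.
Proof.
case: fenceH => ia [ib [iab _]].
move=> [[] i] [[] j]; rewrite /fv /= => E.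
- by rewrite (ib _ _ E).
- by move: (iab j i); rewrite E eqxx.
- by move: (iab i j); rewrite E eqxx.
- by rewrite (ia _ _ E).
Qed.

Lemma inF t : (t \in F) = [exists k, fv k == t].
Proof.
apply/idP/existsP.
- rewrite /fence_vertices in_setU => /orP[]/imsetP[i _ ->];
    [exists (false, i) | exists (true, i)]; by [].
- move=> [[[] i] /eqP <-]; rewrite /fence_vertices in_setU /fv /=; apply/orP;
    [right|left]; apply/imsetP; by exists i.
Qed.

Lemma fvF k : fv k \in F.
Proof. by rewrite inF; apply/existsP; exists k. Qed.

Lemma FV : F \subset tV H.
Proof. by case: fenceH => _ [_ [_ [h _]]]. Qed.

Lemma fvV k : fv k \in tV H.
Proof. exact: (subsetP FV) (fvF k). Qed.

Definition P (q : K -> K) (t : T) : T :=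
  if [pick k | fv k == t] is Some k then fv (q k) else t.

Lemma P_fv q k : P q (fv k) = fv (q k).
Proof.
rewrite /P; case: pickP => [k' /eqP /fv_inj -> // | /(_ k)]; by rewrite eqxx.
Qed.

Lemma P_out q t : t \notin F -> P q t = t.
Proof. rewrite /P; case: pickP => // k /eqP <-; by rewrite fvF. Qed.

Lemma blk_fv k l : blk H (fv k) (fv l) = cblack k l.
Proof.
case: fenceH => _ [_ [_ [_ [hA [hB [_ [_ [hAB _]]]]]]]].
case: k l => [[] i] [[] j]; rewrite /blk /fv /cblack /= ?hA ?hB //.
all: try by rewrite hAB.
all: by rewrite setUC hAB.
Qed.

Lemma rd_fv k l : rd H (fv k) (fv l) = cred k l.
Proof.
case: fenceH => _ [_ [_ [_ [_ [_ [hA [hB [_ hAB]]]]]]]].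
case: k l => [[] i] [[] j]; rewrite /rd /fv /cred /= ?hA ?hB //.
all: try by rewrite hAB.
all: by rewrite setUC hAB.
Qed.

Lemma adj_fv k l : adj H (fv k) (fv l) = cblack k l || cred k l.
Proof. exact: (congr2 orb (blk_fv k l) (rd_fv k l)). Qed.

Lemma P_eq_fv q u k : u \in tV H -> (P q u = fv k <-> exists2 k', u = fv k' & q k' = k).
Proof.
move=> hu; case: (boolP (u \in F)) => hF.
- move: hF; rewrite inF => /existsP[k' /eqP <-]; rewrite P_fv; split.
    by move/fv_inj => <-; exists k'.
  by case=> k'' /fv_inj -> ->.
- rewrite P_out //; split => [E | [k' E _]]; by move: hF; rewrite E fvF.
Qed.

Lemma P_eq_out q u z : z \notin F -> (P q u = z <-> u = z).
Proof.
move=> zF; case: (boolP (u \in F)) => hF.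
- move: (hF); rewrite inF => /existsP[k' /eqP Eu]; rewrite -Eu P_fv; split=> E.
    by move: zF; rewrite -E fvF.
  by move: zF; rewrite -E fvF.
- by rewrite P_out.
Qed.

Lemma AllB_fv q k l : AllB H (P q) (fv k) (fv l) <-> allb q k l.
Proof.
split.
- move=> hA; apply/allP => k' _; apply/allP => l' _; apply/implyP => /andP[/eqP e1 /eqP e2].
  by rewrite -blk_fv; apply: hA; rewrite ?fvV ?P_fv ?e1 ?e2.
- move=> /allP hb u w hu hw /(P_eq_fv q k hu) [k' -> e1] /(P_eq_fv q l hw) [l' -> e2].
  have := allP (hb k' (mem_allK _)) l' (mem_allK _).
  by rewrite e1 e2 !eqxx /= blk_fv.
Qed.

Lemma ExA_fv q k l : ExA H (P q) (fv k) (fv l) <-> exa q k l.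
Proof.
split.
- move=> [u [w [hu hw /(P_eq_fv q k hu) [k' -> e1] /(P_eq_fv q l hw) [l' -> e2] ha]]].
  apply/hasP; exists k'; first exact: mem_allK.
  apply/hasP; exists l'; first exact: mem_allK.
  by rewrite e1 e2 !eqxx -adj_fv.
- move=> /hasP [k' _ /hasP [l' _ /and3P [/eqP e1 /eqP e2 ha]]].
  exists (fv k'), (fv l'); split; rewrite ?fvV ?P_fv ?e1 ?e2 //.
  by rewrite adj_fv.
Qed.

Lemma AllB_fz q k z : z \in tV H -> z \notin F ->
  (AllB H (P q) (fv k) z <-> forall k', q k' = k -> blk H (fv k') z).
Proof.
move=> hz zF; split.
- by move=> hA k' e; apply: hA; rewrite ?fvV ?P_fv ?e ?P_out.
- move=> hf u w hu hw /(P_eq_fv q k hu) [k' -> e1] /(P_eq_out q w zF) ->.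
  exact: hf.
Qed.

Lemma ExA_fz q k z : z \in tV H -> z \notin F ->
  (ExA H (P q) (fv k) z <-> exists k', q k' = k /\ adj H (fv k') z).
Proof.
move=> hz zF; split.
- move=> [u [w [hu hw /(P_eq_fv q k hu) [k' -> e1] /(P_eq_out q w zF) -> ha]]].
  by exists k'.
- move=> [k' [e ha]]; exists (fv k'), z; split; rewrite ?fvV ?P_fv ?e ?P_out //.
Qed.

Lemma AllB_oo q z w : z \in tV H -> z \notin F -> w \in tV H -> w \notin F ->
  (AllB H (P q) z w <-> blk H z w).
Proof.
move=> hz zF hw wF; split.
- by move=> hA; apply: hA; rewrite ?P_out.
- by move=> hb u v hu hv /(P_eq_out q u zF) -> /(P_eq_out q v wF) ->.
Qed.

Lemma ExA_oo q z w : z \in tV H -> z \notin F -> w \in tV H -> w \notin F ->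
  (ExA H (P q) z w <-> adj H z w).
Proof.
move=> hz zF hw wF; split.
- by move=> [u [v [hu hv /(P_eq_out q u zF) -> /(P_eq_out q v wF) -> ha]]].
- by move=> ha; exists z, w; split; rewrite ?P_out.
Qed.

Lemma out_red q k z : z \in tV H -> z \notin F ->
  ~ (forall k', q k' = k -> blk H (fv k') z) ->
  (exists k', q k' = k /\ adj H (fv k') z) -> z = s /\ mixedb q k.
Proof.
move=> hz zF nA [k' [ek' hadj]].
case: ruleH => _ [X [Xsub [hAz [hBz hXS]]]].
have hzVF : z \in tV H :\: F by rewrite in_setD zF hz.
have blkX : z \in X -> forall k'', blk H (fv k'') z.
  move=> zX [[] i]; rewrite /fv /=.
  - exact: (hBz i z hzVF).2 zX.
  - by apply: (hAz i z hzVF).2; rewrite in_setU zX.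
case: (boolP (z \in X)) => zX.
  by exfalso; apply: nA => k'' _; exact: blkX.
have adjA : forall i, adj H (a i) z = (z == s).
  by move=> i; rewrite (hAz i z hzVF).1 in_setU (negbTE zX) in_set1.
have adjB : forall i, adj H (b i) z = false.
  by move=> i; rewrite (hBz i z hzVF).1 (negbTE zX).
case: k' ek' hadj => [[] i] ek'; rewrite /fv /= ?adjB ?adjA // => /eqP zs.
split => //; apply/andP; split.
- apply/negPn/negP => nh; apply: nA => -[[] j] ek''.
  + by exfalso; move/negP: nh; apply; apply/hasP; exists (true, j); rewrite ?mem_allK //= ek'' eqxx.
  + rewrite /fv /=; apply: (hAz j z hzVF).2; by rewrite in_setU in_set1 zs eqxx orbT.
- by apply/hasP; exists (false, i); rewrite ?mem_allK //= ek' eqxx.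
Qed.


Lemma transfer q G : Inv H G (P q) -> okq q -> max_red_le G 4.
Proof.
move=> [wfG hV hC] /andP[/allP okk okm] x hx.
have hx0 := hx; rewrite hV in hx0; case/imsetP: hx0 => t ht Ex.
case: (boolP (t \in F)) => tF.
- move: tF; rewrite inF => /existsP[k0 /eqP Et]; subst t; rewrite P_fv in Ex.
  set k := q k0 in Ex; subst x.
  have rk : isrep q k by apply/hasP; exists k0; rewrite ?mem_allK.
  have bound := implyP (okk k (mem_allK k)) rk.
  rewrite /red_deg.
  apply: leq_trans (_ : #|fv @: [set l | [&& isrep q l, l != k & credp q k l]] :|:
                         (if mixedb q k then [set s] else set0)| <= _).
    apply: subset_leq_card; apply/subsetP => z; rewrite inE => /andP[hz hr].
    have [nz _ _] := wf_rd wfG hr.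
    have [_ h2] := hC _ _ hx hz nz.
    have [nA eA] := h2.1 hr.
    have hz0 := hz; rewrite hV in hz0; case/imsetP: hz0 => w hw Ez.
    case: (boolP (w \in F)) => wF.
    + move: wF; rewrite inF => /existsP[l0 /eqP Ew]; subst w; rewrite P_fv in Ez; subst z.
      apply/setUP; left; apply/imsetP; exists (q l0) => //; rewrite inE.
      apply/and3P; split.
      * by apply/hasP; exists l0; rewrite ?mem_allK.
      * by apply: contra nz => /eqP ->.
      * rewrite /credp; apply/andP; split.
          by apply/negP => hb; apply: nA; apply/AllB_fv.
        by apply/ExA_fv.
    + rewrite P_out // in Ez; subst z.
      have [zs mk] := out_red hw wF (fun h => nA (proj2 (AllB_fz q k hw wF) h))
                              (proj1 (ExA_fz q k hw wF) eA).
      by apply/setUP; right; rewrite mk zs in_set1.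
  rewrite cardsU; apply: leq_trans (leq_subr _ _) _; apply: leq_trans _ bound.
  apply: leq_add.
    by apply: leq_trans (leq_imset_card _ _) _; apply: card_le_count.
  by case: (mixedb q k); rewrite ?cards1 ?cards0.
- rewrite P_out // in Ex; subst t.
  apply: leq_trans (_ : #|[set w in tV H | [set x; w] \in tR H] :|:
             (if x == s then fv @: [set l | mixedb q l] else set0)| <= _).
    apply: subset_leq_card; apply/subsetP => z; rewrite inE => /andP[hz hr].
    have [nz _ _] := wf_rd wfG hr.
    have [_ h2] := hC _ _ hx hz nz.
    have [nA eA] := h2.1 hr.
    have hz0 := hz; rewrite hV in hz0; case/imsetP: hz0 => w hw Ez.
    case: (boolP (w \in F)) => wF.
    + move: wF; rewrite inF => /existsP[l0 /eqP Ew]; subst w; rewrite P_fv in Ez; subst z.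
      have nA' : ~ AllB H (P q) (fv (q l0)) x by move=> h; apply: nA; apply/AllB_sym.
      have eA' : ExA H (P q) (fv (q l0)) x by apply/ExA_sym.
      have [xs mk] := out_red ht tF (fun h => nA' (proj2 (AllB_fz _ _ ht tF) h))
                              (proj1 (ExA_fz _ _ ht tF) eA').
      apply/setUP; right; rewrite xs eqxx; apply/imsetP; exists (q l0) => //.
      by rewrite inE.
    + rewrite P_out // in Ez; subst z.
      apply/setUP; left; rewrite inE hw /=.
      have nb : ~ blk H x w by move=> h; apply: nA; apply/(AllB_oo q ht tF hw wF).
      have ha : adj H x w by apply/(ExA_oo q ht tF hw wF).
      case/orP: ha => // hb; by exfalso; apply: nb.
  rewrite cardsU; apply: leq_trans (leq_subr _ _) _.
  case: (eqVneq x s) => [xs | xs].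
    subst x; apply: leq_trans (leq_add sdeg (_ : _ <= 1)) _ => //.
    by apply: leq_trans (leq_imset_card _ _) _; apply: leq_trans (card_le_count _) okm.
  by rewrite cards0 addn0; apply: maxH.
Qed.

Lemma rep_V q G k : Inv H G (P q) -> isrep q k -> fv k \in tV G.
Proof.
move=> [_ hV _] /hasP[k' _ /eqP e]; rewrite hV; apply/imsetP; exists (fv k').
  exact: fvV.
by rewrite P_fv e.
Qed.

Lemma chain (st : seq (K * K)) q G r :
  Inv H G (P q) -> okchain q st r -> dseq 4 G (contractSet H F (fv r)).
Proof.
elim: st q G => [|[x y] st IH] q G hI.
- move=> /andP[ok /allP hr].
  have hcs : Inv H (contractSet H F (fv r)) (fun t => if t \in F then fv r else t).
    by apply: (Inv_cs (Inv_id wfH) FV (fvF r)) => t _.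
  have mx := transfer hI ok.
  have eG : G = contractSet H F (fv r).
    apply: (Inv_uniq hI hcs) => t ht; case: (boolP (t \in F)) => tF.
      move: (tF); rewrite inF => /existsP[k /eqP <-]; rewrite P_fv.
      by move/eqP: (hr k (mem_allK k)) => ->.
    by rewrite P_out.
  by rewrite -eG; apply: dseq_nil.
- move=> /and5P[ok rx ry nxy hst].
  apply: (dseq_cons (u := fv x) (v := fv y)).
  + exact: transfer hI ok.
  + exact: rep_V hI rx.
  + exact: rep_V hI ry.
  + by apply: contra nxy => /eqP /fv_inj ->.
  apply: (IH (upd q x y)) hst.
  rewrite /contract; apply: (Inv_cs hI).
  + by apply/subsetP => t; rewrite in_set2 => /orP[]/eqP ->; [exact: rep_V hI rx | exact: rep_V hI ry].
  + exact: set21.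
  move=> t ht; case: (boolP (t \in F)) => tF.
    move: (tF); rewrite inF => /existsP[k /eqP <-]; rewrite !P_fv /upd /=.
    rewrite in_set2 !(inj_eq fv_inj).
    by case: eqP => [->|_]; case: eqP => [->|_] //=; rewrite ?eqxx ?orbT.
  rewrite !P_out //; rewrite in_set2.
  have nx : (t == fv x) = false by apply/negbTE; apply: contra tF => /eqP ->; apply: fvF.
  have ny : (t == fv y) = false by apply/negbTE; apply: contra tF => /eqP ->; apply: fvF.
  by rewrite nx ny.
Qed.

End Fence.


Lemma steps_ok : okchain id steps (true, o5).
Proof. by vm_compute. Qed.

Theorem lemma4p10 (T : finType) (H : trigraph T) (a b : 'I_6 -> T) (s : T) :
  wf_trigraph H ->
  max_red_le H 4 ->
  is_fence H a b ->
  attached H a b [set s] ->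
  red_deg H s <= 3 ->
  attachment_rule H a b [set s] ->
  exists2 r, r \in fence_vertices a b &
    dseq 4 H (contractSet H (fence_vertices a b) r).
Proof.
move=> wf mx fe att sd ru.
exists (fv a b (true, o5)); first exact: fvF.
apply: (chain wf mx fe sd ru _ steps_ok).
apply: (Inv_ext (Inv_id wf)) => t ht /=.
case: (boolP (t \in fence_vertices a b)) => tF.
  by move: (tF); rewrite inF => /existsP[k /eqP <-]; rewrite (P_fv fe).
by rewrite P_out.
Qed.
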